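(* Let $d>k\geq1$ be integers, let $\beta>0$ and $\lambda_k>2\sqrt{\beta}$, and let $A:=\mathrm{diag}(\lambda_k,\dots,\lambda_k,2\sqrt\beta,\dots,2\sqrt\beta)\in\mathbb{R}^{d\times d}$, with $\lambda_k$ repeated $k$ times and $2\sqrt\beta$ repeated $d-k$ times. Let $U_k\in\mathbb{R}^{d\times k}$ be the matrix of the first $k$ standard basis vectors and $U_{-k}\in\mathbb{R}^{d\times(d-k)}$ that of the last $d-k$ standard basis vectors. Let $\varepsilon\in(0,1)$. Then there exist $X_0\in\mathrm{St}(d,k)$ with $\cos\theta_k(U_k,X_0)>0$ and perturbations $(\Xi_t)_{t\geq0}\subset\mathbb{R}^{d\times k}$ satisfying, for all $t\geq0$, $U_k^\top\Xi_t=0$ and $\|U_{-k}^\top\Xi_t\|_2\leq 8(\lambda_k-2\sqrt\beta)\varepsilon$, such that the ANPM iterates $(X_t)_{t\geq0}$ on $A$ with momentum $\beta$ and these perturbations satisfy $\tan\theta_k(U_k,X_t)>\varepsilon$ for all $t\geq0$.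
   Context: $\mathrm{St}(d,k):=\{X\in\mathbb{R}^{d\times k}:X^\top X=I_k\}$. For $Y\in\mathbb{R}^{d\times k}$, $\mathrm{QR}(Y)$ is the pair $(X,R)$ with $Y=XR$, $X\in\mathrm{St}(d,k)$, $R$ upper triangular $k\times k$ with nonnegative diagonal (unique, $R$ invertible, when $Y$ has full column rank). For $U,X\in\mathrm{St}(d,k)$, $\theta_k(U,X):=\arccos\sigma_{\min}(U^\top X)\in[0,\pi/2]$. ANPM with momentum $\beta$ and perturbations $(\Xi_t)$: given $X_0\in\mathrm{St}(d,k)$, $(X_1,R_1)=\mathrm{QR}(\tfrac12 AX_0+\Xi_0)$, and for $t\geq1$, $Y_{t+1}=AX_t-\beta X_{t-1}R_t^{-1}+\Xi_t$, $(X_{t+1},R_{t+1})=\mathrm{QR}(Y_{t+1})$. *)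

(* Defs.v *)
From HB Require Import structures.
From mathcomp Require Import all_boot all_order all_algebra.
From mathcomp Require Import all_classical all_reals all_analysis.
Set Implicit Arguments. Unset Strict Implicit. Unset Printing Implicit Defensive.
Import Order.TTheory GRing.Theory Num.Theory.
Local Open Scope classical_set_scope.
Local Open Scope ring_scope.

Section Defs.
Variable R : realType.

Definition vnorm n (v : 'cV[R]_n) : R := Num.sqrt (\sum_i v i 0 ^+ 2).

Definition unit_sphere n : set 'cV[R]_n := [set v | vnorm v = 1].

Definition spec_norm m n (M : 'M[R]_(m, n)) : R :=
  sup [set vnorm (M *m v) | v in @unit_sphere n].

Definition sigma_min n (B : 'M[R]_n) : R :=
  inf [set vnorm (B *m v) | v in @unit_sphere n].

Definition stiefel d k (X : 'M[R]_(d, k)) : Prop := X^T *m X = 1%:M.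

Definition theta_k d k (U X : 'M[R]_(d, k)) : R := acos (sigma_min (U^T *m X)).

Definition tan_ext (x : R) : \bar R :=
  if cos x == 0 then +oo%E else (tan x)%:E.

Definition upper_tri_nonneg k (Rm : 'M[R]_k) : Prop :=
  (forall i j : 'I_k, (j < i)%N -> Rm i j = 0) /\ (forall i : 'I_k, 0 <= Rm i i).

(* (X, Rm) = QR(Y) with Y of full column rank (Rm invertible): this pair is unique *)
Definition is_QR d k (Y X : 'M[R]_(d, k)) (Rm : 'M[R]_k) : Prop :=
  [/\ stiefel X, upper_tri_nonneg Rm, Rm \in unitmx & Y = X *m Rm].

Definition ANPM d k (A : 'M[R]_d) (beta : R) (Xi : nat -> 'M[R]_(d, k))
    (X : nat -> 'M[R]_(d, k)) (Rs : nat -> 'M[R]_k) : Prop :=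
  stiefel (X 0%N) /\
  is_QR ((2%:R)^-1 *: (A *m X 0%N) + Xi 0%N) (X 1%N) (Rs 1%N) /\
  forall t : nat, (1 <= t)%N ->
    is_QR (A *m X t - beta *: (X t.-1 *m invmx (Rs t)) + Xi t) (X t.+1) (Rs t.+1).

Definition A_diag d k (lam beta : R) : 'M[R]_d :=
  \matrix_(i, j) if i == j then (if (i < k)%N then lam else 2 * Num.sqrt beta) else 0.

Definition U_top d k : 'M[R]_(d, k) := \matrix_(i, j) ((i : nat) == j)%:R.
Definition U_bot d k : 'M[R]_(d, d - k) := \matrix_(i, j) ((i : nat) == k + j)%:R.

End Defs.

(* Main.v *)
Require Import Defs.
From HB Require Import structures.
From mathcomp Require Import all_boot all_order all_algebra.
From mathcomp Require Import all_classical all_reals all_analysis.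
Import Order.TTheory GRing.Theory Num.Theory.
Local Open Scope ring_scope.

Lemma sumind {R : realType} {n} (g : 'I_n -> R) {m} (mn : (m < n)%N) :
    \sum_(l < n) ((l:nat) == m)%:R * g l = g (Ordinal mn).
Proof.
rewrite (bigD1 (Ordinal mn)) //= eqxx mul1r big1 ?addr0 //.
move=> l /eqP ne; case: eqP => [e|]; last by rewrite mul0r.
by exfalso; apply: ne; apply/val_inj; rewrite /= e.
Qed.

Lemma A_mul (R : realType) d k lam beta (M : 'M[R]_(d, k)) i j :
  (A_diag d k lam beta *m M) i j =
  (if (i < k)%N then lam else 2 * Num.sqrt beta) * M i j.
Proof.
rewrite mxE (bigD1 i) //= mxE eqxx big1 ?addr0 // => l /negbTE ne.
by rewrite mxE eq_sym ne mul0r.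
Qed.

From mathcomp Require Import zify ring lra.

Definition Xm {R : realType} d k (c s : R) : 'M[R]_(d,k) :=
  \matrix_(l, i) if (i:nat) == k.-1 then c * ((l:nat) == k.-1)%:R + s * ((l:nat) == d.-1)%:R
                 else ((l:nat) == i)%:R.

Lemma Xm_stiefel (R : realType) d k (c s : R) : (k < d)%N -> c^+2 + s^+2 = 1 ->
  stiefel (Xm d k c s).
Proof.
move=> kd cs; apply/matrixP => i j; rewrite [LHS]mxE [RHS]mxE.
under eq_bigr => l _ do rewrite [(_^T) _ _]mxE [Xm _ _ _ _ l i]mxE.
have ik := ltn_ord i; have jk := ltn_ord j.
case: (eqVneq (i:nat) k.-1) => ei.
  have h1 : (k.-1 < d)%N by lia.
  have h2 : (d.-1 < d)%N by lia.
  under eq_bigr => l _ do rewrite mulrDl -!mulrA.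
  rewrite big_split /= -!mulr_sumr.
  rewrite (sumind ((Xm d k c s)^~ j) h1) (sumind ((Xm d k c s)^~ j) h2) !mxE /=.
  case: (eqVneq (j:nat) k.-1) => ej.
    have -> : i = j by apply/val_inj; rewrite /= ei ej.
    rewrite !eqxx /=.
    have -> : (k.-1 == d.-1) = false by apply/eqP; lia.
    have -> : (d.-1 == k.-1) = false by apply/eqP; lia.
    rewrite !mulr0 addr0 add0r !mulr1 -expr2 -expr2; exact: cs.
  have -> : (i == j) = false by apply/eqP => e; move: ej; rewrite -e ei eqxx.
  rewrite /=.
  have -> : (d.-1 == j) = false by apply/eqP; lia.
  by rewrite !mulr0 addr0.
have h1 : (i < d)%N by lia.
rewrite (sumind ((Xm d k c s)^~ j) h1) !mxE /=.
case: (eqVneq (j:nat) k.-1) => ej.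
  have -> : (i == j) = false by apply/eqP => e; move: ei; rewrite e ej eqxx.
  rewrite (negbTE ei).
  have -> : ((i:nat) == d.-1) = false by apply/eqP; lia.
  by rewrite !mulr0 addr0.
by [].
Qed.

Lemma sumsq1 {R : realType} n (v : 'cV[R]_n) : unit_sphere v -> \sum_i v i 0 ^+ 2 = 1.
Proof.
rewrite /unit_sphere /vnorm /= => h.
by rewrite -(@sqr_sqrtr _ (\sum_i v i 0 ^+ 2)) ?h ?expr1n // sumr_ge0 // => i _; rewrite sqr_ge0.
Qed.

Lemma sigma_min_diag {R : realType} n (w : 'I_n -> R) (c : R) (i0 : 'I_n) :
  0 <= c -> (forall i, c ^+ 2 <= w i ^+ 2) -> w i0 = c ->
  sigma_min (\matrix_(i, j) (((j:nat) == i)%:R * w i)) = c.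
Proof.
move=> c0 cw wi0.
have Mv : forall v : 'cV[R]_n, forall i,
    ((\matrix_(i, j) (((j:nat) == i)%:R * w i)) *m v) i 0 = w i * v i 0.
  move=> v i; rewrite mxE.
  under eq_bigr => j _ do rewrite mxE mulrAC.
  by rewrite -mulr_suml (sumind (fun j => v j 0) (ltn_ord i)) mulrC; congr (_ * v _ _); apply/val_inj.
rewrite /sigma_min; apply/le_anti/andP; split.
  have hl : has_lbound [set vnorm ((\matrix_(i, j) (((j:nat) == i)%:R * w i)) *m v) | v in @unit_sphere R n].
    by exists 0 => _ [v _ <-]; rewrite /vnorm sqrtr_ge0.
  apply: (ge_inf hl).
  exists (\col_i ((i == i0)%:R)).
    rewrite /unit_sphere /vnorm /=.
    rewrite (bigD1 i0) //= big1 ?addr0 ?mxE ?eqxx ?expr1n ?sqrtr1 // => i /negbTE ne.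
    by rewrite mxE ne expr0n.
  rewrite /vnorm.
  rewrite (bigD1 i0) //= big1 ?addr0.
    by rewrite Mv mxE eqxx mulr1 wi0 sqrtr_sqr ger0_norm.
  by move=> i /negbTE ne; rewrite Mv mxE ne mulr0 expr0n.
apply: lb_le_inf.
  exists (vnorm ((\matrix_(i, j) (((j:nat) == i)%:R * w i)) *m (\col_i ((i == i0)%:R)))).
  exists (\col_i ((i == i0)%:R)) => //.
  rewrite /unit_sphere /vnorm /=.
  rewrite (bigD1 i0) //= big1 ?addr0 ?mxE ?eqxx ?expr1n ?sqrtr1 // => i /negbTE ne.
  by rewrite mxE ne expr0n.
move=> _ [v uv <-]; rewrite /vnorm.
rewrite -(ger0_norm c0) -sqrtr_sqr ler_sqrt; last by rewrite sumr_ge0 // => i _; rewrite sqr_ge0.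
have -> : c ^+ 2 = c ^+ 2 * \sum_i v i 0 ^+ 2 by rewrite (@sumsq1 _ _ _ uv) mulr1.
rewrite mulr_sumr; apply: ler_sum => i _.
by rewrite Mv exprMn ler_wpM2r // sqr_ge0.
Qed.

Definition Eb {R : realType} d k : 'M[R]_(d,k) :=
  \matrix_(l, i) (((l:nat) == d.-1)%:R * ((i:nat) == k.-1)%:R).

Lemma UX {R : realType} d k (c s : R) : (k < d)%N ->
  (U_top R d k)^T *m Xm d k c s =
  \matrix_(i, j) (((j:nat) == i)%:R * (if (i:nat) == k.-1 then c else 1)).
Proof.
move=> kd; apply/matrixP => i j; rewrite [RHS]mxE mxE.
under eq_bigr => l _ do rewrite [(_^T) _ _]mxE [U_top _ _ _ _ _]mxE.
have h : (i < d)%N by have := ltn_ord i; lia.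
rewrite (sumind ((Xm d k c s)^~ j) h) !mxE /=.
have -> : ((i:nat) == d.-1) = false by apply/eqP; have := ltn_ord i; lia.
case: (eqVneq (j:nat) k.-1) => ej; case: (eqVneq (i:nat) k.-1) => ei /=.
- have -> : ((j:nat) == i) = true by apply/eqP; rewrite ei ej.
  by rewrite mulr1 mulr0 addr0 mul1r.
- have -> : ((j:nat) == i) = false by apply/eqP; move/eqP: ei; lia.
  by rewrite !mulr0 addr0 mul0r.
- have -> : ((j:nat) == i) = false by apply/eqP; move/eqP: ej; lia.
  have -> : ((i:nat) == j) = false by apply/eqP; move/eqP: ej; lia.
  by rewrite mul0r.
- by rewrite eq_sym mulr1.
Qed.

Lemma UEb {R : realType} d k : (k < d)%N -> (U_top R d k)^T *m Eb d k = 0.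
Proof.
move=> kd; apply/matrixP => i j; rewrite [RHS]mxE mxE.
under eq_bigr => l _ do rewrite [(_^T) _ _]mxE [U_top _ _ _ _ _]mxE.
have h : (i < d)%N by have := ltn_ord i; lia.
rewrite (sumind ((Eb d k)^~ j) h) !mxE /=.
have -> : ((i:nat) == d.-1) = false by apply/eqP; have := ltn_ord i; lia.
by rewrite mul0r.
Qed.

Lemma spec_Eb {R : realType} d k (a : R) : (1 <= k)%N -> (k < d)%N ->
  spec_norm ((U_bot R d k)^T *m (a *: Eb d k)) <= `|a|.
Proof.
move=> k1 kd.
have hk : (k.-1 < k)%N by lia.
have hm : (d.-1 - k < d - k)%N by lia.
set N := _ *m _.
have Ne : forall i j, N i j = a * (((i:nat) == (d.-1 - k)%N)%:R * ((j:nat) == k.-1)%:R).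
  move=> i j; rewrite /N -scalemxAr [LHS]mxE; congr (_ * _); rewrite mxE.
  under eq_bigr => l _ do rewrite [(_^T) _ _]mxE [U_bot _ _ _ _ _]mxE.
  have hi : ((k + i)%N < d)%N by have := ltn_ord i; lia.
  rewrite (sumind ((Eb d k)^~ j) hi) mxE /=.
  by have -> : ((k + i)%N == d.-1) = ((i:nat) == (d.-1 - k)%N) by apply/eqP/eqP; lia.
have Nv : forall v : 'cV[R]_k, forall i,
    (N *m v) i 0 = a * ((i:nat) == (d.-1 - k)%N)%:R * v (Ordinal hk) 0.
  move=> v i; rewrite mxE.
  under eq_bigr => j _ do rewrite Ne mulrA -mulrA.
  by rewrite -mulr_sumr (sumind (fun j => v j 0) hk).
rewrite /spec_norm; apply: ge_sup.
  exists (vnorm (N *m (\col_i ((i == Ordinal hk)%:R)))).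
  exists (\col_i ((i == Ordinal hk)%:R)) => //.
  rewrite /unit_sphere /vnorm /=.
  rewrite (bigD1 (Ordinal hk)) //= big1 ?addr0 ?mxE ?eqxx ?expr1n ?sqrtr1 // => i /negbTE ne.
  by rewrite mxE ne expr0n.
move=> _ [v uv <-]; rewrite /vnorm.
rewrite -sqrtr_sqr ler_sqrt ?sqr_ge0 //.
have sq : forall (b : bool) (x y : R), (x * b%:R * y) ^+ 2 = b%:R * (x * y) ^+ 2.
  by move=> [] x y /=; rewrite ?mulr1 ?mul1r ?mulr0 ?mul0r ?expr0n.
under eq_bigr => i _ do rewrite Nv sq.
rewrite (sumind (fun _ => (a * v (Ordinal hk) 0) ^+ 2) hm) exprMn.
rewrite -[X in _ <= X]mulr1 ler_wpM2l ?sqr_ge0 // -(@sumsq1 _ _ _ uv).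
rewrite (bigD1 (Ordinal hk)) //= lerDl sumr_ge0 // => i _; exact: sqr_ge0.
Qed.

Lemma AX {R : realType} d k (lam beta c s : R) : (1 <= k)%N -> (k < d)%N ->
  A_diag d k lam beta *m Xm d k c s =
  lam *: Xm d k c s + ((2 * Num.sqrt beta - lam) * s) *: Eb d k.
Proof.
move=> k1 kd; apply/matrixP => l j; rewrite A_mul !mxE.
have lt := ltn_ord l; have jt := ltn_ord j.
case: (ltnP l k) => lk.
  have -> : ((l:nat) == d.-1) = false by apply/eqP; lia.
  by rewrite mulr0n !mul0r !mulr0 !addr0.
have -> : ((l:nat) == k.-1) = false by apply/eqP; lia.
case: (eqVneq (l:nat) j) => [e|_]; first lia.
case: (eqVneq (j:nat) k.-1) => ej /=; last by rewrite mulr0n !mulr0 addr0.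
ring.
Qed.

Fixpoint rs {R : realType} (lam beta : R) n : R :=
  match n with
  | 0 => 1
  | 1 => lam / 2
  | S (S _ as p) => lam - beta / rs lam beta p
  end.

Lemma rs_pos {R : realType} (lam beta : R) : 0 < beta -> 2 * Num.sqrt beta < lam ->
  forall n, Num.sqrt beta < rs lam beta n.+1.
Proof.
move=> b0 hl; have sb : 0 < Num.sqrt beta by rewrite sqrtr_gt0.
have sb2 : Num.sqrt beta ^+ 2 = beta by rewrite sqr_sqrtr // ltW.
elim => [|n IH] /=; first lra.
have r0 : 0 < rs lam beta n.+1 by apply: lt_trans IH.
have : beta / rs lam beta n.+1 < Num.sqrt beta.
  rewrite ltr_pdivrMr // -{1}sb2 expr2 ltr_pM2l //.
lra.
Qed.

Lemma QR_scalar {R : realType} d k (X : 'M[R]_(d,k)) r : stiefel X -> 0 < r ->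
  is_QR (r *: X) X r%:M.
Proof.
move=> sX r0; split => //.
- split => [i j ji|i]; rewrite mxE.
    by have -> : (i == j) = false by apply/eqP => e; move: ji; rewrite e ltnn.
  by rewrite eqxx mulr1n ltW.
- by rewrite unitmxE det_scalar unitrX // unitfE gt_eqF.
- by rewrite mul_mx_scalar.
Qed.

Theorem theorem3 (R : realType) (d k : nat) (beta lam eps : R) :
  (1 <= k)%N -> (k < d)%N -> 0 < beta -> 2 * Num.sqrt beta < lam ->
  0 < eps -> eps < 1 ->
  exists (Xi : nat -> 'M[R]_(d, k)) (X : nat -> 'M[R]_(d, k)) (Rs : nat -> 'M[R]_k),
    [/\ 0 < cos (theta_k (U_top R d k) (X 0%N)),
        (forall t, (U_top R d k)^T *m Xi t = 0),
        (forall t, spec_norm ((U_bot R d k)^T *m Xi t)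
                     <= 8%:R * (lam - 2 * Num.sqrt beta) * eps),
        ANPM (A_diag d k lam beta) beta Xi X Rs
      & forall t, (eps%:E < tan_ext (theta_k (U_top R d k) (X t)))%E].
Proof.
move=> k1 kd b0 hl e0 e1.
set t := eps / 2.
have t0 : 0 < t by rewrite divr_gt0.
have t1 : t < 1 by rewrite /t; lra.
have q0 : 0 < 1 + t ^+ 2 by rewrite ltr_pwDr ?exprn_gt0 // ltr01.
set c := (1 - t ^+ 2) / (1 + t ^+ 2).
set s := (2 * t) / (1 + t ^+ 2).
have c0 : 0 < c by rewrite divr_gt0 // subr_gt0 expr2; nra.
have c1 : c <= 1 by rewrite ler_pdivrMr // mul1r; nra.
have s0 : 0 <= s by rewrite divr_ge0 // ?ltW // mulr_gt0.
have et : eps = 2 * t by rewrite /t; field.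
have se : s <= eps by rewrite ler_pdivrMr // et; nra.
have cs : c ^+ 2 + s ^+ 2 = 1 by rewrite /c /s; field; rewrite gt_eqF.
have ecs : eps * c < s.
  have -> : eps * c = s - eps * t ^+ 2 / (1 + t ^+ 2).
    by rewrite et /c /s; field; rewrite gt_eqF.
  by rewrite ltrBlDr ltrDl divr_gt0 // mulr_gt0 // exprn_gt0.
have hk : (k.-1 < k)%N by lia.
have sb : 0 < Num.sqrt beta by rewrite sqrtr_gt0.
set X := Xm d k c s.
have sX : stiefel X by apply: Xm_stiefel.
set al := (2 * Num.sqrt beta - lam) * s.
exists (fun n => (if n is 0 then - (2^-1 * al) else - al) *: Eb d k), (fun _ => X),
  (fun n => (rs lam beta n)%:M).
have smin : sigma_min ((U_top R d k)^T *m X) = c.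
  rewrite UX //; apply: (@sigma_min_diag R k _ c (Ordinal hk)); first exact: ltW.
    move=> i; case: ifP => _ //; rewrite expr1n expr2; nra.
  by rewrite /= eqxx.
have cth : cos (theta_k (U_top R d k) X) = c.
  by rewrite /theta_k smin acosK // in_itv /=; apply/andP; split; lra.
split.
- by rewrite cth.
- by move=> n; rewrite -scalemxAr UEb // scaler0.
- move=> n; apply: le_trans (spec_Eb _ _ _ k1 kd) _.
  case: n => [|n] /=; rewrite normrN.
    rewrite normrM normfV normr_nat /al normrM ler0_norm ?ger0_norm //; last lra.
    apply: le_trans (ler_piMl _ _) _.
    - apply: mulr_ge0 => //; lra.
    - by rewrite invf_le1 // ler1n.
    - nra.
  rewrite /al normrM ler0_norm ?ger0_norm //; last lra.
  nra.
- split => //; split.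
    have -> : 2^-1 *: (A_diag d k lam beta *m X) + - (2^-1 * al) *: Eb d k = rs lam beta 1 *: X.
      rewrite AX // scalerDr !scalerA -addrA -scalerDl addrN scale0r addr0 /=.
      by rewrite mulrC.
    by apply: QR_scalar => //; have := @rs_pos R lam beta b0 hl 0; lra.
  case => [//|n] _.
  have -> : A_diag d k lam beta *m X - beta *: (X *m invmx (rs lam beta n.+1)%:M) +
      - al *: Eb d k = rs lam beta n.+2 *: X.
    rewrite AX // invmx_scalar mul_mx_scalar scalerA /= scalerBl scaleNr addrAC.
    by rewrite -(addrA (lam *: _)) addrN addr0.
  by apply: QR_scalar => //; have := @rs_pos R lam beta b0 hl n.+1; lra.
- move=> n; rewrite /tan_ext cth gt_eqF // lte_fin /tan cth.
  rewrite /theta_k smin sin_acos; last by apply/andP; split; lra.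
  have -> : 1 - c ^+ 2 = s ^+ 2 by rewrite -cs; ring.
  by rewrite sqrtr_sqr ger0_norm // ltr_pdivlMr.
Qed.
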